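(* Let $G$ be a connected graph with vertex set $\{u_1,\dots,u_n\}$, $n\ge2$, and let $\mathcal{H}=\{H_1,\dots,H_n\}$ be a family of non-empty graphs. Then $\dim_l(G\circ\mathcal{H})=n$ if and only if each true twin equivalence class of $G$ contains at most one vertex $u_i$ with $H_i\in\mathcal{G}$, and each $H_i$ is a bipartite graph having exactly one non-trivial connected component $H_i^*$, and this component has radius $r(H_i^* )\le2$.
   Context: All graphs are finite and simple with at least one vertex; non-empty means having at least one edge; a non-trivial connected component is one with at least two vertices. $d_G$ is shortest-path distance ($+\infty$ between components), $d_{G,2}=\min\{d_G,2\}$; $s$ distinguishes $x,y$ w.r.t. $d$ if $d(s,x)\ne d(s,y)$. $\dim_l(G)$: minimum size of $S\subseteq V(G)$ such that any two adjacent vertices are distinguished w.r.t. $d_G$ by some vertex of $S$. Local adjacency bases of $H$: minimum-size sets $S\subseteq V(H)$ such that any two adjacent vertices are distinguished w.r.t. $d_{H,2}$ by some vertex of $S$. $\mathcal{G}$: class of graphs $H$ such that every local adjacency basis $B$ of $H$ satisfies $B\subseteq N_H(v)$ for some $v\in V(H)$. True twins: $N[x]=N[y]$. Lexicographic product $G\circ\mathcal{H}$: vertex set $\bigcup_i\{u_i\}\times V(H_i)$, $(u_i,v)\sim(u_j,w)$ iff $u_iu_j\in E(G)$, or $i=j$ and $vw\in E(H_i)$. *)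

(* Defs.v *)
From mathcomp Require Import all_boot.
Set Implicit Arguments. Unset Strict Implicit. Unset Printing Implicit Defensive.

Section Graphs.
Variable T : finType.
Implicit Types (e : rel T) (S C : {set T}) (x y s v w : T).

Definition simple_graph e := symmetric e /\ irreflexive e.
Definition nonempty_graph e := exists x y, e x y.
Definition connected_graph e := forall x y, connect e x y.

Fixpoint within e (k : nat) x y : bool :=
  if k is k'.+1 then within e k' x y || [exists z, within e k' x z && e z y]
  else x == y.

(* shortest-path distance; None stands for +infinity (different components) *)
Definition dist e x y : option nat :=
  let k := find (fun k => within e k x y) (iota 0 #|T|.+1) in
  if k <= #|T| then Some k else None.

Definition dist2 e x y : nat :=
  if dist e x y is Some k then minn k 2 else 2.

Definition local_resolving e S : bool :=
  [forall x, forall y, e x y ==> [exists s in S, dist e s x != dist e s y]].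

Definition local_dim e : nat :=
  \big[minn/#|T|]_(S : {set T} | local_resolving e S) #|S|.

Definition adj_local_resolving e S : bool :=
  [forall x, forall y, e x y ==> [exists s in S, dist2 e s x != dist2 e s y]].

Definition adj_local_dim e : nat :=
  \big[minn/#|T|]_(S : {set T} | adj_local_resolving e S) #|S|.

Definition local_adjacency_basis e S : Prop :=
  adj_local_resolving e S /\ #|S| = adj_local_dim e.

Definition open_nbhd e v : {set T} := [set w | e v w].
Definition closed_nbhd e v : {set T} := v |: open_nbhd e v.

Definition in_classG e : Prop :=
  forall B, local_adjacency_basis e B -> exists v, B \subset open_nbhd e v.

Definition true_twins e x y : Prop := closed_nbhd e x = closed_nbhd e y.

Definition bipartite e : Prop :=
  exists c : T -> bool, forall x y, e x y -> c x != c y.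

Definition component e x : {set T} := [set y | connect e x y].

Definition nontrivial_component e C : Prop :=
  exists x, C = component e x /\ 1 < #|C|.

(* eccentricity of v inside the component C (distances inside a connected
   component coincide with those of the whole graph, and are finite) *)
Definition ecc_in e C v : nat := \max_(w in C) odflt 0 (dist e v w).
Definition radius_of e C : nat := \big[minn/#|T|]_(v in C) ecc_in e C v.

End Graphs.

Definition lex_prod (n : nat) (eG : rel 'I_n) (V : 'I_n -> finType)
  (E : forall i, rel (V i)) : rel {i : 'I_n & V i} :=
  fun p q => eG (tag p) (tag q) ||
             ((tag q == tag p) && E (tag p) (tagged p) (tagged_as p q)).

(* Main.v *)
Require Import Defs.
From mathcomp Require Import all_boot.
Set Implicit Arguments. Unset Strict Implicit. Unset Printing Implicit Defensive.

Section Gen.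
Variable T : finType.
Variable e : rel T.

Lemma within_refl k x : within e k x x.
Proof. by elim: k => [|k IH] /=; rewrite ?eqxx ?IH. Qed.

Lemma within_mono k k' x y : k <= k' -> within e k x y -> within e k' x y.
Proof.
elim: k' => [|k' IH]; first by rewrite leqn0 => /eqP ->.
rewrite leq_eqVlt => /orP[/eqP -> //|]; rewrite ltnS => Hk H /=.
by rewrite IH.
Qed.

Lemma within1 x y : within e 1 x y = (x == y) || e x y.
Proof.
rewrite /=; apply/idP/idP => /orP[->//|].
  by case/existsP => z /andP[/eqP <- ->]; rewrite orbT.
by move=> H; apply/orP; right; apply/existsP; exists x; rewrite eqxx.
Qed.

Lemma within2 x y : within e 2 x y =
  [|| x == y, e x y | [exists z, e x z && e z y]].
Proof.
have -> : within e 2 x y = within e 1 x y || [exists z, within e 1 x z && e z y] by [].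
rewrite within1.
apply/idP/idP.
  case/orP=> [/orP[->|->]|]; rewrite ?orbT //.
  case/existsP => z /andP[]; rewrite within1 => /orP[/eqP <- ->|]; first by rewrite orbT.
  move=> H1 H2; rewrite orbA; apply/orP; right; apply/existsP; exists z; by rewrite H1.
case/orP=> [->//|]; case/orP=> [->|]; first by rewrite orbT.
case/existsP => z /andP[H1 H2]; apply/orP; right; apply/existsP; exists z.
by rewrite within1 H1 orbT.
Qed.

Lemma dist_some x y k : dist e x y = Some k ->
  within e k x y /\ (forall k', k' < k -> ~~ within e k' x y).
Proof.
rewrite /dist; set f := find _ _; case: ifP => // Hle [<-].
have Hs : f < size (iota 0 #|T|.+1).
  by rewrite size_iota ltnS.
split.
  have := nth_find 0 (a := fun k => within e k x y) (s := iota 0 #|T|.+1).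
  by rewrite has_find => /(_ Hs); rewrite nth_iota.
move=> k' Hk'; have := before_find 0 (a := fun k => within e k x y) (s := iota 0 #|T|.+1) Hk'.
by rewrite nth_iota ?add0n => [->//|]; apply: leq_trans Hk' _; rewrite ltnW.
Qed.

Lemma dist_le_card x y k : dist e x y = Some k -> k <= #|T|.
Proof. by rewrite /dist; case: ifP => // Hle [<-]. Qed.

Lemma dist_le x y k : k <= #|T| -> within e k x y ->
  exists2 k', k' <= k & dist e x y = Some k'.
Proof.
move=> Hk Hw.
have Hf : find (fun k => within e k x y) (iota 0 #|T|.+1) <= k.
  rewrite leqNgt; apply/negP => Hlt.
  by have := before_find 0 Hlt; rewrite nth_iota ?add0n ?Hw // ltnS.
exists (find (fun k => within e k x y) (iota 0 #|T|.+1)) => //.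
by rewrite /dist (leq_trans Hf Hk).
Qed.

Lemma dist_ext x y x' y' : (forall k, within e k x y = within e k x' y') ->
  dist e x y = dist e x' y'.
Proof.
move=> H; rewrite /dist.
by rewrite (@eq_find _ (fun k => within e k x y) (fun k => within e k x' y')).
Qed.

Definition d2' x y := if x == y then 0 else if e x y then 1 else 2.

Lemma dist2E x y : dist2 e x y = d2' x y.
Proof.
rewrite /dist2 /d2'.
case: (eqVneq x y) => [<-|nxy].
  have [k' Hk ->] := dist_le (leq0n _) (within_refl 0 x).
  by move: Hk; rewrite leqn0 => /eqP ->.
case Exy: (e x y).
  have Hw : within e 1 x y by rewrite within1 Exy orbT.
  have H1 : 1 <= #|T| by apply/card_gt0P; exists x.
  have [k' Hk Hd] := dist_le H1 Hw; rewrite Hd.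
  move: Hk; rewrite leq_eqVlt ltnS leqn0 => /orP[/eqP->//|/eqP Hk0].
  by move: (dist_some Hd) => [] ; rewrite Hk0 /= (negPf nxy).
case Hd: (dist e x y) => [k|] //.
have [Hw _] := dist_some Hd.
case: k Hw Hd => [|[|k]] Hw Hd //=; first by rewrite /= (negPf nxy) in Hw.
by rewrite within1 (negPf nxy) Exy in Hw.
Qed.

Lemma dist_d2 x y : within e 2 x y -> dist e x y = Some (d2' x y).
Proof.
move=> Hw; rewrite /d2'.
case: (eqVneq x y) => [<-|nxy].
  have [k' Hk ->] := dist_le (leq0n _) (within_refl 0 x).
  by move: Hk; rewrite leqn0 => /eqP ->.
have H2 : 2 <= #|T|.
  by have := cards2 x y; rewrite nxy => <-; exact: max_card.
have [k' Hk Hd] := dist_le H2 Hw; rewrite Hd.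
have [Hw' _] := dist_some Hd.
case: k' Hk Hw' Hd => [|[|[|k]]] //= Hk Hw' Hd.
- by rewrite (negPf nxy) in Hw'.
- by rewrite -/(within e 1 x y) within1 (negPf nxy) /= in Hw' *; rewrite Hw'.
- case Exy: (e x y) => //.
  by have [_ /(_ 1 (ltnSn _))] := dist_some Hd; rewrite within1 Exy orbT.
Qed.

Lemma dist_adj x y : x != y -> e x y -> dist e x y = Some 1.
Proof.
move=> nxy Exy; rewrite dist_d2 /d2' ?(negPf nxy) ?Exy //.
by apply: (within_mono (k := 1)) => //; rewrite within1 Exy orbT.
Qed.

Lemma dist_one x y : dist e x y = Some 1 -> (x == y) || e x y.
Proof. by move/dist_some => [] ; rewrite within1. Qed.

Lemma path_within x p : path e x p -> within e (size p) x (last x p).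
Proof.
elim/last_ind: p => [|p z IH]; first by rewrite /= eqxx.
rewrite rcons_path size_rcons last_rcons => /andP[/IH Hw Hl] /=.
by apply/orP; right; apply/existsP; exists (last x p); rewrite Hw.
Qed.

Lemma connect_dist x y : connect e x y -> exists k, dist e x y = Some k.
Proof.
case/connectP => p Hp ->.
case: (shortenP Hp) => p' Hp' Hu _.
have Hs : size p' <= #|T|.
  have := card_uniqP Hu; rewrite /= => Hc.
  by apply: leq_trans (max_card (mem (x :: p'))); rewrite Hc leqnSn.
have [k _ Hd] := dist_le Hs (path_within Hp').
by exists k.
Qed.

Hypothesis (Hsym : symmetric e) (Hirr : irreflexive e).

Lemma twin_within x y w : true_twins e x y -> w != x -> w != y ->
  forall k, within e k w x = within e k w y.
Proof.
move=> Ht nwx nwy.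
have step : forall x y, true_twins e x y -> forall k,
    within e k w x = within e k w y ->
    within e k.+1 w x -> within e k.+1 w y.
  move=> x' y' Ht' k IH /= /orP[|/existsP[z /andP[Hz Ez]]].
    by rewrite IH => ->.
  case: (eqVneq z y') => [Ezy|nzy].
    by rewrite -Ezy Hz.
  have : z \in closed_nbhd e x' by rewrite !inE Hsym Ez orbT.
  rewrite Ht' !inE (negPf nzy) /= => Eyz.
  by apply/orP; right; apply/existsP; exists z; rewrite Hz Hsym.
elim=> [|k IH]; first by rewrite /= (negPf nwx) (negPf nwy).
apply/idP/idP; first exact: step.
by apply: step; [rewrite /true_twins -Ht|].
Qed.

End Gen.

Section BigMin.
Variables (I : finType) (P : pred I) (F : I -> nat) (d : nat).

Lemma bigmin_le i : P i -> \big[minn/d]_(j | P j) F j <= F i.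
Proof.
move=> Pi; have : i \in index_enum I by rewrite mem_index_enum.
elim: (index_enum I) => [//|a r IH]; rewrite inE big_cons.
case/orP=> [/eqP <-|Hr].
  by rewrite Pi geq_minl.
case: (P a) => //; last exact: IH.
by apply: leq_trans (geq_minr _ _) (IH Hr).
Qed.

Lemma bigmin_ge m : m <= d -> (forall j, P j -> m <= F j) ->
  m <= \big[minn/d]_(j | P j) F j.
Proof.
move=> Hd HF; apply: (big_ind (fun x => m <= x)) => //.
by move=> x y Hx Hy; rewrite leq_min Hx Hy.
Qed.

Lemma bigmin_attain : \big[minn/d]_(j | P j) F j = d \/
  exists2 j, P j & \big[minn/d]_(j | P j) F j = F j.
Proof.
apply: (big_ind (fun x => x = d \/ exists2 j, P j & x = F j)).
- by left.
- move=> x y Hx Hy; rewrite /minn; case: ifP => _; [exact: Hx|exact: Hy].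
- by move=> j Pj; right; exists j.
Qed.
End BigMin.

Section Single.
Variable T : finType.
Variable e : rel T.
Hypothesis (Hsym : symmetric e) (Hirr : irreflexive e).
Hypothesis Hne : nonempty_graph e.

Definition sres s := forall x y, e x y -> d2' e s x != d2' e s y.

Lemma sres_alr s : adj_local_resolving e [set s] <-> sres s.
Proof.
split.
  move=> /forallP H x y Exy; have := H x; move/forallP/(_ y); rewrite Exy /=.
  by case/existsP => t /andP[]; rewrite inE => /eqP ->; rewrite !dist2E.
move=> H; apply/forallP => x; apply/forallP => y; apply/implyP => Exy.
by apply/existsP; exists s; rewrite inE eqxx !dist2E H.
Qed.

Lemma sres_nb s : sres s -> exists v, e s v.
Proof.
move=> H; case: Hne => x [y Exy]; have := H x y Exy; rewrite /d2'.
case: (eqVneq s x) => [Hsx|nsx]; first by subst x; exists y.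
case: (eqVneq s y) => [Hsy|nsy]; first by subst y; exists x; rewrite Hsym.
case Esx: (e s x); first by exists x.
case Esy: (e s y); first by exists y.
by rewrite eqxx.
Qed.

Lemma sres_touch s x z : sres s -> e x z -> [|| x == s, e s x, z == s | e s z].
Proof.
move=> H Exz; have := H x z Exz; rewrite /d2'.
rewrite !(eq_sym s).
case: (x == s); case: (e s x); case: (z == s); case: (e s z) => //.
Qed.

Lemma within2_sym x y : within e 2 x y = within e 2 y x.
Proof.
rewrite !within2 eq_sym Hsym; congr (_ || (_ || _)).
apply/existsP/existsP => [] [z /andP[H1 H2]]; exists z; by apply/andP; split; rewrite Hsym.
Qed.

Lemma comp_eq x y : connect e x y -> component e x = component e y.
Proof.
move=> H; apply/setP => z; rewrite !inE.
exact: (same_connect (sym_connect_sym Hsym) H).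
Qed.

Lemma comp_big x : 1 < #|component e x| -> exists z, e x z.
Proof.
move=> Hc.
have [y Hy nyx] : exists2 y, y \in component e x & y != x.
  apply/exists_inP; apply: contraTT Hc => /exists_inPn Hn.
  rewrite -leqNgt -(cards1 x); apply: subset_leq_card.
  by apply/subsetP => z /Hn; rewrite negbK inE.
move: Hy; rewrite inE => /connectP[[|z p] /=]; first by move=> _ Hyx; rewrite Hyx eqxx in nyx.
by case/andP=> Exz _ _; exists z.
Qed.

Lemma ga1 s : sres s -> bipartite e /\ exists C, nontrivial_component e C /\
  (forall C', nontrivial_component e C' -> C' = C) /\ radius_of e C <= 2.
Proof.
move=> H.
have [v Esv] := sres_nb H.
split.
  exists (fun x => e s x) => x y Exy; have := H x y Exy; rewrite /d2'.
  case: (eqVneq s x) => [Hsx|nsx]; first by subst x; rewrite Hirr Exy.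
  case: (eqVneq s y) => [Hsy|nsy]; first by subst y; rewrite Hirr Hsym Exy.
  by case: (e s x); case: (e s y).
have Hsv : s != v by apply: contraTneq Esv => ->; rewrite Hirr.
have HC : 1 < #|component e s|.
  have := cards2 s v; rewrite Hsv => <-; apply: subset_leq_card.
  apply/subsetP => z; rewrite !inE => /orP[/eqP->|/eqP->]; first exact: connect0.
  exact: connect1.
have Hc2 : 2 <= #|T| by apply: leq_trans HC (max_card _).
exists (component e s); split; first by exists s.
split.
  move=> C' [x [-> Hx]]; have [z Exz] := comp_big Hx.
  apply: esym; apply: comp_eq.
  have := sres_touch H Exz.
  case/orP=> [/eqP->|]; first exact: connect0.
  case/orP=> [/connect1 //|].
  case/orP=> [/eqP Hz|Esz].
    by apply: connect1; rewrite -Hz Hsym.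
  by apply: connect_trans (connect1 Esz) (connect1 _); rewrite Hsym.
have Hs : s \in component e s by rewrite inE connect0.
apply: leq_trans (bigmin_le (ecc_in e (component e s)) #|T| Hs) _.
apply/bigmax_leqP => w; rewrite inE => /connectP[p Hp ->].
have Hcl : forall x y, within e 2 s x -> e x y -> within e 2 s y.
  move=> x y; rewrite !within2 => Hx Exy.
  case/orP: Hx => [/eqP Hsx|]; first by subst x; rewrite Exy orbT.
  case/orP=> [Esx|Hx].
    by rewrite orbA; apply/orP; right; apply/existsP; exists x; rewrite Esx.
  have := H x y Exy; rewrite /d2'.
  case: (eqVneq s x) => [Hsx|nsx]; first by subst x; rewrite Exy orbT.
  case Esx: (e s x).
    by rewrite orbA => _; apply/orP; right; apply/existsP; exists x; rewrite Esx Exy.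
  by case: (s == y); case: (e s y); rewrite ?orbT.
have Hw : forall x p, within e 2 s x -> path e x p -> within e 2 s (last x p).
  move=> x q; elim: q x => [//|z q IH] x Hx /= /andP[Exz Hq].
  exact: IH (Hcl _ _ Hx Exz) Hq.
have := Hw s p (within_refl _ 2 s) Hp.
move/(dist_le Hc2) => [k Hk ->] /=; exact: Hk.
Qed.

Lemma ga2 : bipartite e -> (exists C, nontrivial_component e C /\
  (forall C', nontrivial_component e C' -> C' = C) /\ radius_of e C <= 2) ->
  exists s, sres s.
Proof.
case=> c Hc [C [[x0 [HC0 HC1]] [Hu Hr]]].
have ecc_le : forall v, ecc_in e C v <= #|T|.
  move=> v; apply/bigmax_leqP => w _.
  by case Hd: (dist e v w) => [k|] //=; exact: dist_le_card Hd.
have [v Hv Hecc] : exists2 v, v \in C & ecc_in e C v <= 2.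
  case: (bigmin_attain (fun v => v \in C) (ecc_in e C) #|T|) => [Hd|[v Hv Hd]].
    exists x0; first by rewrite HC0 inE connect0.
    by apply: leq_trans (ecc_le x0) _; rewrite /radius_of Hd in Hr.
  by exists v => //; rewrite -Hd.
have inC : forall x y, e x y -> x \in C.
  move=> x y Exy.
  have Hxy : x != y by apply: contraTneq Exy => ->; rewrite Hirr.
  have : component e x = C.
    apply: Hu; exists x; split => //.
    have := cards2 x y; rewrite Hxy => <-; apply: subset_leq_card.
    apply/subsetP => z; rewrite !inE => /orP[/eqP->|/eqP->]; first exact: connect0.
    exact: connect1.
  by move=> <-; rewrite inE connect0.
have Hw2 : forall w, w \in C -> within e 2 v w.
  move=> w Hw.
  have Hvw : connect e v w.
    move: Hv Hw; rewrite HC0 !inE => Hv.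
    by rewrite -(same_connect (sym_connect_sym Hsym) Hv).
  have [k Hk] := connect_dist Hvw.
  have : k <= 2.
    apply: leq_trans Hecc.
    by have := @leq_bigmax_cond _ (fun w => w \in C) (fun w => odflt 0 (dist e v w)) w Hw; rewrite Hk.
  by move=> Hk2; apply: within_mono Hk2 _; case: (dist_some Hk).
exists v => x y Exy.
have Hx := Hw2 x (inC x y Exy).
have Hy : within e 2 v y by apply: Hw2; apply: (inC y x); rewrite Hsym.
rewrite within2 in Hx; rewrite within2 in Hy; rewrite /d2'.
case: (eqVneq v x) => [Hvx|nvx].
  subst x; case: (eqVneq v y) => [Hvy|nvy]; first by subst y; rewrite Hirr in Exy.
  by case: ifP.
case: (eqVneq v y) => [Hvy|nvy]; first by subst y; case: ifP.
case Evx: (e v x); case Evy: (e v y) => //.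
- have := Hc v x Evx; have := Hc v y Evy; have := Hc x y Exy.
  by case: (c v); case: (c x); case: (c y).
- move: Hx Hy; rewrite (negPf nvx) (negPf nvy) Evx Evy /=.
  case/existsP=> a /andP[Eva Eax]; case/existsP=> b /andP[Evb Eby].
  have := Hc v a Eva; have := Hc a x Eax; have := Hc v b Evb; have := Hc b y Eby.
  have := Hc x y Exy.
  by case: (c v); case: (c x); case: (c y); case: (c a); case: (c b).
Qed.

Lemma ga3 : (exists s, sres s) -> in_classG e.
Proof.
move=> [s Hs] B [HB HBc].
have Hd1 : adj_local_dim e <= 1.
  rewrite /adj_local_dim.
  have Hr : adj_local_resolving e [set s] by apply/sres_alr.
  by apply: leq_trans (bigmin_le (fun S : {set T} => #|S|) #|T| Hr) _; rewrite cards1.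
have [t Ht] : exists t, t \in B.
  case: Hne => x [y Exy]; move/forallP/(_ x)/forallP/(_ y): HB.
  by rewrite Exy /= => /exists_inP[t Ht _]; exists t.
have : #|B| == 1.
  rewrite eqn_leq HBc Hd1 /= -HBc card_gt0; apply/set0Pn; by exists t.
case/cards1P => t' HBt; subst B.
have Hst : sres t' by apply/sres_alr.
have [v Ev] := sres_nb Hst.
exists v; apply/subsetP => z; rewrite inE => /eqP ->.
by rewrite /open_nbhd inE Hsym.
Qed.
End Single.
Unset Implicit Arguments. Set Strict Implicit. Set Printing Implicit Defensive.


Section Prod.
Variables (n : nat) (eG : rel 'I_n) (V : 'I_n -> finType) (E : forall i, rel (V i)).
Hypotheses (Hn : 2 <= n) (HG : simple_graph eG) (Hc : connected_graph eG)
  (HS : forall i : 'I_n, simple_graph (E i)) (HE : forall i : 'I_n, nonempty_graph (E i)).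

Local Notation T := {i : 'I_n & V i}.
Local Notation P := (lex_prod eG E).

Lemma PE_same i (x y : V i) : P (Tagged V x) (Tagged V y) = E i x y.
Proof. by rewrite /lex_prod /= tagged_asE eqxx (HG.2 i). Qed.

Lemma PE_diff (p q : T) : tag p != tag q -> P p q = eG (tag p) (tag q).
Proof. by move=> H; rewrite /lex_prod eq_sym (negPf H) orbF. Qed.

Lemma proj k (w : T) i (a : V i) : tag w != i ->
  within P k w (Tagged V a) = within eG k (tag w) i.
Proof.
elim: k i a => [|k IH] i a Hi.
  rewrite /= (negPf Hi); apply/negP => /eqP Hw.
  by rewrite Hw /= eqxx in Hi.
have Hwr : forall k (x : T), within P k x x by move=> k' x; apply: within_refl.
have Hgr : forall k (x : 'I_n), within eG k x x by move=> k' x; apply: within_refl.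
have HGs := HG.1.
rewrite /= IH //; apply/idP/idP.
  case/orP=> [->//|/existsP[[l c] /andP[Hz Pz]]].
  case: (eqVneq l i) => [Eli|nli].
    by subst l; rewrite IH // in Hz; rewrite Hz.
  have Eli : eG l i.
    by move: Pz; rewrite PE_diff.
  apply/orP; right.
  case: (eqVneq (tag w) l) => [Ewl|nwl].
    by subst l; apply/existsP; exists (tag w); rewrite Hgr.
  by apply/existsP; exists l; rewrite -(IH l c) // Hz.
case/orP=> [->//|/existsP[l /andP[Hl El]]].
apply/orP; right.
case: (eqVneq (tag w) l) => [Ewl|nwl].
  apply/existsP; exists w; rewrite Hwr /= PE_diff /=; first by rewrite Ewl.
  by rewrite Ewl; apply: contraTneq El => ->; rewrite HG.2.
have [c [c' _]] := HE l.
apply/existsP; exists (Tagged V c); rewrite IH // Hl /=.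
rewrite PE_diff /= ?El //.
by apply: contraTneq El => ->; rewrite HG.2.
Qed.

Lemma fiber_same (w : T) i (a b : V i) : tag w != i ->
  dist P w (Tagged V a) = dist P w (Tagged V b).
Proof. by move=> H; apply: dist_ext => k; rewrite !proj. Qed.

Lemma has_nb i : exists j, eG i j.
Proof.
have [j nji] : exists j : 'I_n, j != i.
  have H0 : 0 < n by apply: leq_trans Hn.
  case: (eqVneq i (Ordinal H0)) => [->|ni]; last by exists (Ordinal H0); rewrite eq_sym.
  by exists (Ordinal Hn).
case/connectP: (Hc i j) => [[|z p]] /=.
  by move=> _ Hj; rewrite Hj eqxx in nji.
by case/andP=> Eiz _ _; exists z.
Qed.

Lemma fiber_dist i (s c : V i) :
  dist P (Tagged V s) (Tagged V c) = Some (d2' (E i) s c).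
Proof.
have [j Eij] := has_nb i.
have [y _] := HE j.
rewrite dist_d2.
  by rewrite /d2' eq_Tagged /= PE_same.
rewrite within2; apply/orP; right; apply/orP; right.
have nij : i != j by apply: contraTneq Eij => ->; rewrite HG.2.
apply/existsP; exists (Tagged V y).
rewrite (PE_diff (Tagged V s)) // (PE_diff (Tagged V y)) /=; last by rewrite eq_sym.
by rewrite Eij HG.1 Eij.
Qed.

Lemma P_irr : irreflexive P.
Proof. by case=> i x; rewrite PE_same (HS i).2. Qed.

Lemma res_setT : local_resolving P setT.
Proof.
apply/forallP => p; apply/forallP => q; apply/implyP => Hpq.
apply/exists_inP; exists p; first by rewrite inE.
have [k' Hk ->] := dist_le (leq0n _) (within_refl P 0 p).
move: Hk; rewrite leqn0 => /eqP ->.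
apply/eqP => /esym Hd; have [Hw _] := dist_some Hd.
by move: Hw => /= /eqP Hqp; rewrite Hqp P_irr in Hpq.
Qed.

Lemma fibers S : local_resolving P S -> forall i, exists x : V i, Tagged V x \in S.
Proof.
move=> HSr i; have [a [b Eab]] := HE i.
move/forallP: HSr => /(_ (Tagged V a)) /forallP /(_ (Tagged V b)).
rewrite PE_same Eab /= => /exists_inP [[j x] Ht Hdt].
case: (eqVneq j i) => [Hji|nji]; last by rewrite (fiber_same (Tagged V x) i a b nji) eqxx in Hdt.
by subst j; exists x.
Qed.

Lemma tag_onto S : local_resolving P S -> [set tag x | x in S] = setT.
Proof.
move=> HSr; apply/setP => i; rewrite inE; have [x Hx] := fibers S HSr i.
by apply/imsetP; exists (Tagged V x).
Qed.

Lemma card_ge S : local_resolving P S -> n <= #|S|.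
Proof.
move=> HSr; have := leq_imset_card tag S; rewrite tag_onto //.
by rewrite cardsT card_ord.
Qed.

Lemma ldim_ge : n <= local_dim P.
Proof.
apply: bigmin_ge; last by move=> S; apply: card_ge.
by rewrite -cardsT; apply: card_ge; apply: res_setT.
Qed.

Lemma helper (t x y : T) : tag t != tag x -> tag t != tag y ->
  eG (tag t) (tag x) -> ~~ eG (tag t) (tag y) -> dist P t x != dist P t y.
Proof.
move=> ntx nty Etx Nty.
rewrite (dist_adj (x:=t) (y:=x)); last by rewrite PE_diff.
  apply/eqP => /esym /dist_one; rewrite PE_diff // (negPf Nty) orbF.
  by move=> /eqP Hty; rewrite Hty eqxx in nty.
by apply: contra ntx => /eqP ->.
Qed.


Lemma main_thm :
  local_dim P = n <->
  ((forall i j, true_twins eG i j -> in_classG (E i) -> in_classG (E j) -> i = j) /\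
   (forall i, bipartite (E i) /\
      exists C, nontrivial_component (E i) C /\
        (forall C', nontrivial_component (E i) C' -> C' = C) /\
        radius_of (E i) C <= 2)).
Proof.
have HGs := HG.1.
split.
  move=> Hd.
  have [S HSr HSc] : exists2 S, local_resolving P S & #|S| = n.
    case: (bigmin_attain (fun S => local_resolving P S) (fun S : {set T} => #|S|) #|{: T}|) => [H|[S HS0 H]].
      by exists setT; [exact: res_setT | rewrite cardsT -H].
    by exists S => //; rewrite -H.
  have Hinj : {in S &, injective tag}.
    by apply/imset_injP; rewrite tag_onto // cardsT card_ord HSc.
  have Hfib := fibers S HSr.
  have Hsres : forall i (s : V i), Tagged V s \in S -> sres (E i) s.
    move=> i s Hs a b Eab.
    move/forallP: HSr => /(_ (Tagged V a)) /forallP /(_ (Tagged V b)).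
    rewrite PE_same Eab /= => /exists_inP [t Ht Hdt].
    case: (eqVneq (tag t) i) => [Hti|nti]; last by rewrite (fiber_same t i a b nti) eqxx in Hdt.
    have Ht' : t = Tagged V s by apply: Hinj.
    rewrite Ht' !fiber_dist in Hdt.
    by apply: contraNneq Hdt => ->.
  split.
    move=> i j Htw _ _; apply/eqP; apply/negP => /negP nij.
    have [si Hsi] := Hfib i; have [sj Hsj] := Hfib j.
    have [a Ea] := sres_nb (HS i).1 (HE i) (Hsres _ _ Hsi).
    have [b Eb] := sres_nb (HS j).1 (HE j) (Hsres _ _ Hsj).
    have Eij : eG i j.
      have : j \in closed_nbhd eG i by rewrite Htw /closed_nbhd !inE eqxx.
      by rewrite /closed_nbhd /open_nbhd !inE eq_sym (negPf nij).
    move/forallP: HSr => /(_ (Tagged V a)) /forallP /(_ (Tagged V b)).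
    rewrite PE_diff //= Eij /= => /exists_inP [t Ht Hdt].
    have nsa : Tagged V si != Tagged V a.
      by rewrite eq_Tagged /=; apply: contraTneq Ea => ->; rewrite (HS i).2.
    have nsb : Tagged V sj != Tagged V b.
      by rewrite eq_Tagged /=; apply: contraTneq Eb => ->; rewrite (HS j).2.
    have nji : j != i by rewrite eq_sym.
    have d1 : dist P (Tagged V si) (Tagged V b) = Some 1.
      apply: dist_adj; last by rewrite PE_diff.
      by apply/negP => /eqP /(congr1 tag) /= Hij; rewrite Hij eqxx in nij.
    have d2 : dist P (Tagged V sj) (Tagged V a) = Some 1.
      apply: dist_adj; last by rewrite PE_diff //= HGs.
      by apply/negP => /eqP /(congr1 tag) /= Hij; rewrite Hij eqxx in nij.
    case: (eqVneq (tag t) i) => [Hti|nti].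
      have Ht' : t = Tagged V si by apply: Hinj.
      by rewrite Ht' (dist_adj nsa) ?PE_same // d1 eqxx in Hdt.
    case: (eqVneq (tag t) j) => [Htj|ntj].
      have Ht' : t = Tagged V sj by apply: Hinj.
      by rewrite Ht' (dist_adj nsb) ?PE_same // d2 eqxx in Hdt.
    move: Hdt; rewrite (dist_ext (x' := t) (y' := Tagged V b)) ?eqxx //.
    by move=> k; rewrite !proj // (twin_within HGs Htw).
  move=> i; have [s Hs] := Hfib i.
  exact: ga1 (HS i).1 (HS i).2 (HE i) _ (Hsres _ _ Hs).
move=> [Htw Hst].
have Hex : forall i, exists s : V i, adj_local_resolving (E i) [set s].
  move=> i; have [Hb HC] := Hst i.
  have [s Hs] := ga2 (HS i).1 (HS i).2 Hb HC.
  by exists s; apply/sres_alr.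
pose sf i := xchoose (Hex i).
have Hsf : forall i, sres (E i) (sf i) by move=> i; apply/(sres_alr (E i) (sf i)); exact: (xchooseP (Hex i)).
have Hcl : forall i, in_classG (E i).
  by move=> i; apply: ga3 (HS i).1 (HE i) _; exists (sf i).
pose S := [set Tagged V (sf i) | i : 'I_n].
have HSc : #|S| = n.
  rewrite card_imset ?cardsT ?card_ord //.
  by move=> i j /(congr1 tag).
have HSin : forall i, Tagged V (sf i) \in S by move=> i; apply/imsetP; exists i.
have HSr : local_resolving P S.
  apply/forallP => p; apply/forallP => q; apply/implyP.
  case: p => i a; case: q => j b Hpq.
  case: (eqVneq i j) => [Hij|nij].
    subst j; rewrite PE_same in Hpq.
    apply/exists_inP; exists (Tagged V (sf i)) => //.
    rewrite !fiber_dist; apply/eqP => -[] Heq.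
    by move: (Hsf i a b Hpq); rewrite Heq eqxx.
  rewrite PE_diff //= in Hpq.
  have nt : ~ true_twins eG i j.
    by move=> Ht; move: nij; rewrite (Htw i j Ht (Hcl i) (Hcl j)) eqxx.
  have [w Hw] : exists w, (w \in closed_nbhd eG i) != (w \in closed_nbhd eG j).
    apply/existsP; rewrite -negb_forall; apply/negP => /forallP H; apply: nt.
    by apply/setP => w; apply/eqP; exact: H w.
  move: Hw; rewrite /closed_nbhd /open_nbhd !inE.
  case: (eqVneq w i) => [->|nwi] /=.
    by rewrite HGs Hpq orbT.
  case: (eqVneq w j) => [->|nwj] /=.
    by rewrite Hpq.
  move=> Hw; apply/exists_inP; exists (Tagged V (sf w)) => //; move: Hw.
  case Eiw: (eG i w); case Ejw: (eG j w) => //= _.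
    apply: helper => //=; first by rewrite HGs.
    by rewrite HGs Ejw.
  rewrite eq_sym; apply: helper => //=; first by rewrite HGs.
  by rewrite HGs Eiw.
apply/eqP; rewrite eqn_leq ldim_ge andbT.
by have := bigmin_le (P := local_resolving P) (fun S0 : {set T} => #|S0|) #|{: T}| HSr; rewrite HSc.
Qed.
End Prod.

Theorem theorem3 (n : nat) (eG : rel 'I_n) (V : 'I_n -> finType)
    (E : forall i, rel (V i)) :
  2 <= n ->
  simple_graph eG -> connected_graph eG ->
  (forall i, simple_graph (E i)) -> (forall i, nonempty_graph (E i)) ->
  local_dim (lex_prod eG E) = n <->
  ((forall i j, true_twins eG i j -> in_classG (E i) -> in_classG (E j) -> i = j) /\
   (forall i, bipartite (E i) /\
      exists C, nontrivial_component (E i) C /\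
        (forall C', nontrivial_component (E i) C' -> C' = C) /\
        radius_of (E i) C <= 2)).
Proof.
move=> Hn HG Hc HS HE.
exact: main_thm.
Qed.
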